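(* Let $t\ge 2$ and $k_1,\dots,k_t\ge 2$ be integers. If a finite simple graph $G$ contains an induced subgraph isomorphic to the vertex-disjoint union $P_{k_1}\cup P_{k_2}\cup\cdots\cup P_{k_t}$ of paths on $k_1,\dots,k_t$ vertices, then \[\mathrm{mur}(G)\ge \Big(\sum_{i=1}^t k_i\Big)-(t+1).\]
   Context: For a finite simple undirected graph $G$ on vertices $v_1,\dots,v_n$, let $A_G$ be its $(0,1)$-adjacency matrix, $D_G=\mathrm{diag}(d_1,\dots,d_n)$ with $d_i$ the degree of $v_i$, $I$ the $n\times n$ identity matrix and $J$ the $n\times n$ all-ones matrix. A universal adjacency matrix of $G$ is any matrix $\alpha A_G+\beta I+\gamma J+\delta D_G$ with real scalars $\alpha,\beta,\gamma,\delta$ and $\alpha\neq 0$. The minimum universal rank $\mathrm{mur}(G)$ is the minimum rank over all universal adjacency matrices of $G$. *)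

(* Defs.v *)
From HB Require Import structures.
From mathcomp Require Import all_boot all_order all_algebra.
From mathcomp Require Import boolp reals.
Set Implicit Arguments. Unset Strict Implicit. Unset Printing Implicit Defensive.
Import Order.TTheory GRing.Theory Num.Theory.
Local Open Scope ring_scope.

Definition simple_graph (n : nat) (e : rel 'I_n) : Prop :=
  symmetric e /\ irreflexive e.

Section Matrices.
Variables (R : realType) (n : nat) (e : rel 'I_n).

Definition adjmx : 'M[R]_n := \matrix_(i, j) (e i j)%:R.
Definition degree (i : 'I_n) : nat := #|[set j | e i j]|.
Definition degmx : 'M[R]_n := diag_mx (\row_i (degree i)%:R).
Definition allones : 'M[R]_n := const_mx 1.

Definition univ_adj (a b c d : R) : 'M[R]_n :=
  a *: adjmx + b%:M + c *: allones + d *: degmx.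

Definition is_univ_rank (r : nat) : Prop :=
  exists a b c d : R, a != 0 /\ \rank (univ_adj a b c d) = r.

Lemma is_univ_rank_ex : exists r, `[< is_univ_rank r >].
Proof.
exists (\rank (univ_adj 1 0 0 0)); apply/asboolP.
by exists 1, 0, 0, 0; split => //; exact: oner_neq0.
Qed.

Definition mur : nat := ex_minn is_univ_rank_ex.
End Matrices.

Definition paths_vert (t : nat) (k : 'I_t -> nat) := {i : 'I_t & 'I_(k i)}.

Definition paths_adj (t : nat) (k : 'I_t -> nat) (x y : paths_vert k) : bool :=
  (tag x == tag y) &&
  (((tagged x : nat).+1 == tagged y :> nat) || ((tagged y : nat).+1 == tagged x :> nat)).

Definition has_induced_paths (n : nat) (e : rel 'I_n) (t : nat) (k : 'I_t -> nat) : Prop :=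
  exists f : paths_vert k -> 'I_n,
    injective f /\ forall x y, e (f x) (f y) = paths_adj x y.

(* Main.v *)
Require Import Defs.
From HB Require Import structures.
From mathcomp Require Import all_boot all_order all_algebra.
From mathcomp Require Import boolp reals.
From mathcomp Require Import zify.
From mathcomp Require Import ring.
Set Implicit Arguments. Unset Strict Implicit. Unset Printing Implicit Defensive.
Import Order.TTheory GRing.Theory Num.Theory.
Local Open Scope ring_scope.

Section Aux.
Variables (R : realType) (n : nat) (e : rel 'I_n) (t : nat) (k : 'I_t -> nat).

Local Notation p_ := (fun i : 'I_t => (k i - 1)%N).
Local Notation m := (\sum_(i < t) p_ i)%N.

Definition J (l : 'I_m) : nat := tagnat.sig2 l.
Definition I (l : 'I_m) : 'I_t := tagnat.sig1 l.

Lemma J_lo (l : 'I_m) : (J l < k (I l))%N.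
Proof. have := ltn_ord (tagnat.sig2 l); rewrite /J /I; lia. Qed.
Lemma J_hi (l : 'I_m) : ((J l).+1 < k (I l))%N.
Proof. have := ltn_ord (tagnat.sig2 l); rewrite /J /I; lia. Qed.

Definition X (l : 'I_m) : paths_vert k :=
  Tagged (fun i => 'I_(k i)) (Ordinal (J_lo l)).
Definition Y (l : 'I_m) : paths_vert k :=
  Tagged (fun i => 'I_(k i)) (Ordinal (J_hi l)).

Lemma XY_adj (l l' : 'I_m) : paths_adj (X l) (Y l') =
  (I l == I l') && (((J l).+1 == (J l').+1) || ((J l').+2 == J l)).
Proof. by []. Qed.

Lemma XY_eq (l l' : 'I_m) : X l = Y l' -> I l = I l' /\ J l = (J l').+1.
Proof.
move=> H; split; first exact: (congr1 tag H).
exact: (congr1 (fun z : paths_vert k => nat_of_ord (tagged z)) H).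
Qed.

Lemma IJ_lt (l l' : 'I_m) : I l = I l' -> (l < l')%N -> (J l < J l')%N.
Proof.
move=> HI.
have h1 : (l : nat) = (\sum_(i < t | (i < I l)%N) p_ i + J l)%N := tagnat.rect l.
have h2 : (l' : nat) = (\sum_(i < t | (i < I l')%N) p_ i + J l')%N := tagnat.rect l'.
rewrite HI in h1; lia.
Qed.

Lemma mxrank_sub_le (F : fieldType) (a b : nat) (rv cv : 'I_a -> 'I_b) (N : 'M[F]_b) :
  (\rank (\matrix_(l, l') N (rv l) (cv l')) <= \rank N)%N.
Proof.
have -> : \matrix_(l, l') N (rv l) (cv l') = rowsub rv (rowsub cv N^T)^T.
  by apply/matrixP => i j; rewrite !mxE.
rewrite rowsubE; apply: leq_trans (mxrankM_maxr _ _) _.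
by rewrite mxrank_tr rowsubE; apply: leq_trans (mxrankM_maxr _ _) _; rewrite mxrank_tr.
Qed.

End Aux.

Theorem lemma8 (R : realType) (n : nat) (e : rel 'I_n) (t : nat) (k : 'I_t -> nat) :
  simple_graph e -> (2 <= t)%N -> (forall i, (2 <= k i)%N) ->
  has_induced_paths e k ->
  ((\sum_(i < t) k i) - t.+1 <= mur R e)%N.
Proof.
move=> _ _ _ [f [finj fe]].
rewrite /mur; case: ex_minnP => r /asboolP [a [b [c [d [a0 <-]]]]] _.
pose N := a *: adjmx R e + b%:M + d *: degmx R e.
have NE : forall x y, N x y = a * (e x y)%:R + b *+ (x == y)
            + d * ((degree e x)%:R *+ (x == y)).
  by move=> x y; rewrite !mxE.
have rN : (\rank N <= \rank (univ_adj e a b c d) + 1)%N.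
  have -> : N = univ_adj e a b c d + (- (c *: allones R n)).
    by rewrite /univ_adj /N; apply/matrixP => i j; rewrite !mxE; ring.
  apply: leq_trans (mxrank_add _ _) _; rewrite leq_add2l.
  have -> : - (c *: allones R n) = (const_mx (- c) : 'M_(n, 1)) *m const_mx 1.
    by apply/matrixP => i j; rewrite !mxE big_ord1 !mxE; ring.
  by apply: leq_trans (mxrankM_maxl _ _) _; apply: rank_leq_col.
pose S := \matrix_(l, l') N (f (X l)) (f (Y l')).
have rS : (\rank S <= \rank N)%N by apply: mxrank_sub_le.
have Strig : is_trig_mx S.
  apply/is_trig_mxP => l l' ll'; rewrite /S mxE NE fe (inj_eq finj).
  have -> : paths_adj (X l) (Y l') = false.
    rewrite XY_adj; case: eqP => //= HI.
    have := IJ_lt HI ll'; lia.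
  have -> : (X l == Y l') = false.
    case: eqP => // HXY.
    have [h1 h2] := XY_eq HXY. have := IJ_lt h1 ll'; lia.
  by rewrite !mulr0n mulr0 addr0 add0r mulr0.
have Sdiag : forall l, S l l = a.
  move=> l; rewrite /S mxE NE fe (inj_eq finj).
  have -> : paths_adj (X l) (Y l) = true.
    by rewrite XY_adj !eqxx.
  have -> : (X l == Y l) = false.
    case: eqP => // HXY.
    have [_ h2] := XY_eq HXY; lia.
  by rewrite !mulr0n mulr0 !addr0 mulr1.
have rSm : \rank S = (\sum_(i < t) (k i - 1))%N.
  apply: mxrank_unit; rewrite unitmxE det_trig // unitfE.
  rewrite (eq_bigr (fun _ => a)); last by move=> i _; rewrite Sdiag.
  by rewrite prodr_const expf_neq0.
have hsum : (\sum_(i < t) k i <= \sum_(i < t) (k i - 1) + t)%N.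
  rewrite -[X in (_ <= _ + X)%N]card_ord -sum1_card -big_split /=.
  by apply: leq_sum => i _; lia.
have := leq_trans rS rN; rewrite rSm => h.
move: h hsum; clear.
move: (\rank _) (\sum_(i < t) k i)%N (\sum_(i < t) (k i - 1))%N => x y z.
lia.
Qed.
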